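(* Let $\epsilon\in[0,1)$ and $\theta=\arcsin\!\big(3-\sqrt{4\epsilon+5}\big)$, $s:=\sin\theta$. Consider the two-qubit state $|\psi_\theta\rangle=\cos(\theta/2)|00\rangle-\sin(\theta/2)|11\rangle$ and the observables $$A_0=B_0=\frac{-(2+s)\sqrt{1-s}}{(2-s)\sqrt{1+s}}\,\sigma_z-\frac{\sqrt2\,s^{3/2}}{(2-s)\sqrt{1+s}}\,\sigma_x,\qquad A_1=B_1=-\sqrt{\frac{1-s}{1+s}}\,\sigma_z+\sqrt{\frac{2s}{1+s}}\,\sigma_x .$$ Define $p(ab|xy)=\langle\psi_\theta|\Pi^{a}_{A_x}\otimes\Pi^{b}_{B_y}|\psi_\theta\rangle$ with $\Pi^{a}_{O}=\tfrac12(\mathbb{1}+(-1)^aO)$. Then $p(01|01)=p(10|10)=p(00|11)=0$ and $$p(00|00)+\epsilon\,p(11|00)=\frac{(4\epsilon+5)\sqrt{4\epsilon+5}-(12\epsilon+11)}{2(1+\epsilon)}>\epsilon,$$ so that $(1-\epsilon)p(00|00)+\epsilon(1-\epsilon)p(11|00)-p(01|01)-p(10|10)-p(00|11)>\epsilon(1-\epsilon)$. In particular $p\notin\mathcal{P}_2^{AB,(\epsilon,\epsilon)}$.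
   Context: $\sigma_x,\sigma_z$ are the Pauli matrices; each observable above is a $\pm1$-valued qubit observable (unit Bloch vector). $\mathcal{P}_2^{AB,(\epsilon,\epsilon)}$ (for inputs and outputs in $\{0,1\}$) is the set of conditional distributions $p(ab|xy)=\int q(d\lambda)p_A(a|xy\lambda)p_B(b|xy\lambda)$, where $(\Lambda,q)$ is a probability space and $p_A(\cdot|x,y,\lambda),p_B(\cdot|x,y,\lambda)$ are distributions on $\{0,1\}$ satisfying $\frac12\sum_a|p_A(a|xy\lambda)-p_A(a|xy'\lambda)|\le\epsilon$ for all $x,y,y',\lambda$ and $\frac12\sum_b|p_B(b|xy\lambda)-p_B(b|x'y\lambda)|\le\epsilon$ for all $y,x,x',\lambda$. *)

(* Defs.v *)
From HB Require Import structures.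
From mathcomp Require Import all_boot all_order all_algebra.
From mathcomp Require Import all_classical all_reals all_analysis.
From mathcomp Require Import mxtens.
Set Implicit Arguments. Unset Strict Implicit. Unset Printing Implicit Defensive.
Import Order.TTheory GRing.Theory Num.Theory.
Local Open Scope ring_scope.
Local Open Scope classical_set_scope.

Section Defs.
Variable R : realType.

(* Pauli matrices (real ones suffice here). *)
Definition sigma_z : 'M[R]_2 := \matrix_(i, j) (if i == j then (-1) ^+ (val i) else 0).
Definition sigma_x : 'M[R]_2 := \matrix_(i, j) (if i == j then 0 else 1).

Definition ket (k : 'I_2) : 'cV[R]_2 := delta_mx k 0.

Definition ket2 (a b : 'I_2) : 'cV[R]_(2 * 2) := tensmx (ket a) (ket b).

Definition proj (a : bool) (O : 'M[R]_2) : 'M[R]_2 :=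
  2^-1 *: (1%:M + ((-1) ^+ a) *: O).

Definition expect (psi : 'cV[R]_(2 * 2)) (M : 'M[R]_(2 * 2)) : R :=
  (psi^T *m M *m psi) 0 0.

Definition born (psi : 'cV[R]_(2 * 2)) (A B : bool -> 'M[R]_2)
  (a b x y : bool) : R :=
  expect psi (tensmx (proj a (A x)) (proj b (B y))).

(* The set P_2^{AB,(eA,eB)} of the paper: local models with eA/eB-relaxed
   measurement dependence (signalling), over a probability space. *)
Definition P2 (eA eB : R) (p : bool -> bool -> bool -> bool -> R) : Prop :=
  exists (d : measure_display) (L : measurableType d) (q : probability L R)
         (pA pB : bool -> bool -> bool -> L -> R),
    (forall a x y, measurable_fun setT (pA a x y)) /\
    (forall b x y, measurable_fun setT (pB b x y)) /\
    (forall a x y l, 0 <= pA a x y l) /\ (forall x y l, pA false x y l + pA true x y l = 1) /\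
    (forall b x y l, 0 <= pB b x y l) /\ (forall x y l, pB false x y l + pB true x y l = 1) /\
    (forall x y y' l, 2^-1 * (`|pA false x y l - pA false x y' l| + `|pA true x y l - pA true x y' l|) <= eA) /\
    (forall y x x' l, 2^-1 * (`|pB false x y l - pB false x' y l| + `|pB true x y l - pB true x' y l|) <= eB) /\
    (forall a b x y, (p a b x y)%:E = (\int[q]_l (pA a x y l * pB b x y l)%:E)%E).

End Defs.

Arguments sigma_z {R}.
Arguments sigma_x {R}.
Arguments ket {R}.
Arguments ket2 {R}.
Arguments proj {R}.
Arguments expect {R}.
Arguments born {R}.
Arguments P2 {R}.

(* Main.v *)
Require Import Defs.
From HB Require Import structures.
From mathcomp Require Import all_boot all_order all_algebra.
From mathcomp Require Import all_classical all_reals all_analysis.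
From mathcomp Require Import mxtens measurable_realfun ring lra.
Import Order.TTheory GRing.Theory Num.Theory.
Local Open Scope ring_scope.

Local Open Scope classical_set_scope.
Lemma sum_tens (R : realType) m n (F : 'I_(m * n) -> R) :
  \sum_k F k = \sum_i \sum_j F (mxtens_index (i, j)).
Proof.
rewrite pair_big /=.
rewrite (reindex (@mxtens_index m n)) /=; last first.
  by exists (@mxtens_unindex m n) => x _; rewrite (mxtens_indexK, mxtens_unindexK).
by apply: eq_bigr => -[i j].
Qed.

Lemma tensE' (R : realType) m n p q (A : 'M[R]_(m,n)) (B : 'M[R]_(p,q)) i j k l :
  (A *t B) (mxtens_index (i,j)) (mxtens_index (k,l)) = A i k * B j l.
Proof. exact: tensmxE. Qed.

Lemma expect_sum (R : realType) (psi : 'cV[R]_(2*2)) M :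
  expect psi M = \sum_j \sum_k psi k 0 * M k j * psi j 0.
Proof.
rewrite /expect mxE; apply: eq_bigr => j _; rewrite mxE big_distrl /=.
by apply: eq_bigr => k _; rewrite mxE.
Qed.

Lemma psiE (R : realType) (c d : R) i j :
  (c *: ket2 0 0 - d *: ket2 1 1 : 'cV[R]_(2*2)) (mxtens_index (i, j)) 0
   = c * ((i == 0)%:R * (j == 0)%:R) - d * ((i == 1)%:R * (j == 1)%:R).
Proof.
have E : forall x : 'I_1, (x == 0) = true by move=> x; rewrite (ord1 x).
by rewrite !mxE !mxtens_indexK /= !E !andbT.
Qed.

Lemma born_gen (R : realType) (c d az ax bz bx : R) (a b : bool) :
  expect (c *: ket2 0 0 - d *: ket2 1 1)
    (tensmx (Defs.proj a (az *: sigma_z + ax *: sigma_x)) (Defs.proj b (bz *: sigma_z + bx *: sigma_x)))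
  = 4^-1 * (c^+2 + d^+2 + (-1)^+a * az * (c^+2 - d^+2) + (-1)^+b * bz * (c^+2 - d^+2)
       + (-1)^+a * (-1)^+b * ((c^+2 + d^+2) * az * bz - 2 * c * d * ax * bx)).
Proof.
rewrite expect_sum sum_tens.
under eq_bigr => i _ do under eq_bigr => j _ do rewrite sum_tens.
rewrite !big_ord_recr !big_ord0 /= !add0r.
rewrite !tensE' !psiE /Defs.proj /sigma_z /sigma_x !mxE /=.
case: a; case: b => /=; rewrite ?expr0 ?expr1.
all: by field; rewrite ?pnatr_eq0.
Qed.
Definition G (R : realType) (C s az ax bz bx sa sb : R) :=
  4^-1 * (1 + sa * (az * C) + sb * (bz * C) + sa * sb * (az * bz - s * (ax * bx))).

Arguments G {R}.

Lemma alg_vals (R : realType) (s : R) : 0 < s < 1 ->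
  let C := Num.sqrt (1 - s ^+ 2) in
  let az0 := - ((2 + s) * Num.sqrt (1 - s)) / ((2 - s) * Num.sqrt (1 + s)) in
  let ax0 := - (Num.sqrt 2 * Num.sqrt s ^+ 3 / ((2 - s) * Num.sqrt (1 + s))) in
  let az1 := - Num.sqrt ((1 - s) / (1 + s)) in
  let ax1 := Num.sqrt (2 * s / (1 + s)) in
  [/\ G C s az0 ax0 az1 ax1 1 (-1) = 0, G C s az1 ax1 az0 ax0 (-1) 1 = 0,
      G C s az1 ax1 az1 ax1 1 1 = 0,
      G C s az0 ax0 az0 ax0 1 1 = 4^-1 * (1 + 2 * (-(2+s)*(1-s)/(2-s))
          + (2+s)^+2*(1-s)/((2-s)^+2*(1+s)) - 2*s^+4/((2-s)^+2*(1+s)))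
    & G C s az0 ax0 az0 ax0 (-1) (-1) = 4^-1 * (1 - 2 * (-(2+s)*(1-s)/(2-s))
          + (2+s)^+2*(1-s)/((2-s)^+2*(1+s)) - 2*s^+4/((2-s)^+2*(1+s)))].
Proof.
case/andP=> s0 s1 C az0 ax0 az1 ax1.
set m := Num.sqrt (1 - s); set n := Num.sqrt (1 + s); set t := Num.sqrt s; set w := Num.sqrt (2:R).
have hm : m ^+ 2 = 1 - s by rewrite sqr_sqrtr //; lra.
have hn : n ^+ 2 = 1 + s by rewrite sqr_sqrtr //; lra.
have ht : t ^+ 2 = s by rewrite sqr_sqrtr //; lra.
have hw : w ^+ 2 = 2 by rewrite sqr_sqrtr //; lra.
have n0 : n != 0 by rewrite sqrtr_eq0 -ltNge; lra.
have s2 : 2 - s != 0 by apply/eqP; lra.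
have s1' : 1 + s != 0 by apply/eqP; lra.
have eC : C = m * n by rewrite /C -sqrtrM; [congr Num.sqrt; ring | lra].
have e1 : az1 = - (m / n) by rewrite /az1 sqrtrM ?sqrtrV //; lra.
have e2 : ax1 = w * t / n by rewrite /ax1 !sqrtrM ?sqrtrV //; lra.
have e0 : az0 = -((2+s) * m)/((2-s)*n) by [].
have e0' : ax0 = -(w * t^+3 / ((2-s)*n)) by [].
have P1 : az0 * C = -(2+s)*(1-s)/(2-s).
  by rewrite -[in RHS]hm e0 eC; field; apply/andP.
have P2 : az1 * C = -(1-s) by rewrite -[in RHS]hm eC e1; field.
have P3 : az0 * az1 = (2+s)*(1-s)/((2-s)*(1+s)).
  have -> : (2+s)*(1-s)/((2-s)*(1+s)) = (2+s)* m^+2/((2-s)*n^+2) by rewrite hm hn.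
  by rewrite e1 e0; field; apply/andP.
have P4 : ax0 * ax1 = - (2*s^+2/((2-s)*(1+s))).
  have -> : - (2*s^+2/((2-s)*(1+s))) = - (w^+2*(t^+2)^+2/((2-s)*n^+2)) by rewrite hw ht hn.
  by rewrite e2 e0'; field; apply/andP.
have P5 : az0 * az0 = (2+s)^+2*(1-s)/((2-s)^+2*(1+s)).
  have -> : (2+s)^+2*(1-s)/((2-s)^+2*(1+s)) = (2+s)^+2* m^+2/((2-s)^+2*n^+2) by rewrite hm hn.
  by rewrite e0; field; apply/andP.
have P6 : ax0 * ax0 = 2*s^+3/((2-s)^+2*(1+s)).
  have -> : 2*s^+3/((2-s)^+2*(1+s)) = w^+2*(t^+2)^+3/((2-s)^+2*n^+2) by rewrite hw ht hn.
  by rewrite e0'; field; apply/andP.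
have P7 : az1 * az1 = (1-s)/(1+s).
  have -> : (1-s)/(1+s) = m^+2/n^+2 by rewrite hm hn.
  by rewrite e1; field.
have P8 : ax1 * ax1 = 2*s/(1+s).
  have -> : 2*s/(1+s) = w^+2 * t^+2/n^+2 by rewrite hw ht hn.
  by rewrite e2; field.
rewrite /G [az1 * az0]mulrC [ax1 * ax0]mulrC P1 P2 P3 P4 P5 P6 P7 P8.
split; try field; try (apply/andP; split => //).
all: by [].
Qed.
Lemma step3 (R : realType) (e a b : R) : 0 <= e -> e <= 1 -> 0 <= a <= 1 -> 0 <= b <= 1 ->
  (1 + e) * a * b - e * a - e * b <= Num.max (a - e) 0.
Proof.
move=> e0 e1 /andP[a0 a1] /andP[b0 b1].
case: (lerP a e) => hae.
  have -> : Num.max (a - e) 0 = 0 by apply/max_idPr; lra.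
  have h1 : 0 <= (e - a) * b by apply: mulr_ge0; lra.
  have h2 : 0 <= e * a * (1 - b) by do 2?apply: mulr_ge0; lra.
  lra.
have -> : Num.max (a - e) 0 = a - e by apply/max_idPl; lra.
have h1 : 0 <= (a - e) * (1 - b) by apply: mulr_ge0; lra.
have h2 : 0 <= e * a * (1 - b) by do 2?apply: mulr_ge0; lra.
nra.
Qed.

Lemma step2 (R : realType) (k A B U V : R) : 0 <= k -> 0 <= A <= k -> 0 <= B <= k ->
  0 <= U <= k -> 0 <= V <= k -> A <= B ->
  k * A <= A * (k - U) + B * (k - V) + U * V.
Proof.
move=> k0 /andP[A0 A1] /andP[B0 B1] /andP[U0 U1] /andP[V0 V1] AB.
have h1 : A * (k - V) <= B * (k - V) by apply: ler_wpM2r; lra.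
have h2 : 0 <= A * (k - U - V) + U * V.
  case: (ltrP 0 k) => hk; last first.
    have -> : U = 0 by lra.
    have -> : V = 0 by lra.
    have -> : k = 0 by lra.
    lra.
  have h3 : 0 <= k * (A * (k - U - V) + U * V).
    have -> : k * (A * (k - U - V) + U * V) = A * ((k - U) * (k - V)) + (k - A) * (U * V) by ring.
    apply: addr_ge0; apply: mulr_ge0; try apply: mulr_ge0; lra.
  by rewrite pmulr_rge0 in h3.
lra.
Qed.

Arguments step2 {R k A B U V}.
Arguments step3 {R e a b}.

Lemma pointwise (R : realType) (e a p v z b q u w : R) :
  0 <= e -> e <= 1 ->
  0 <= a <= 1 -> 0 <= p <= 1 -> 0 <= v <= 1 -> 0 <= z <= 1 ->
  0 <= b <= 1 -> 0 <= q <= 1 -> 0 <= u <= 1 -> 0 <= w <= 1 ->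
  `|a - p| <= e -> `|v - z| <= e -> `|b - q| <= e -> `|u - w| <= e ->
  (1 - e) * (a * b) + e * (1 - e) * ((1 - a) * (1 - b))
    - p * (1 - u) - (1 - v) * q - z * w <= e * (1 - e).
Proof.
move=> e0 e1 /andP[a0 a1] /andP[p0 p1] /andP[v0 v1] /andP[z0 z1]
  /andP[b0 b1] /andP[q0 q1] /andP[u0 u1] /andP[w0 w1].
rewrite !ler_norml => /andP[ap1 ap2] /andP[vz1 vz2] /andP[bq1 bq2] /andP[uw1 uw2].
set A := Num.max (a - e) 0; set B := Num.max (b - e) 0.
set U := Num.max (u - e) 0; set V := Num.max (v - e) 0.
have mx : forall x y : R, x <= y -> 0 <= y -> Num.max x 0 <= y.
  by move=> x y h1 h2; rewrite ge_max h1 h2.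
have mg : forall x : R, 0 <= Num.max x 0 /\ x <= Num.max x 0.
  by move=> x; split; rewrite le_max lexx ?orbT.
have [A0 A1] : 0 <= A /\ a - e <= A := mg _.
have [B0 B1] : 0 <= B /\ b - e <= B := mg _.
have [U0 U1] : 0 <= U /\ u - e <= U := mg _.
have [V0 V1] : 0 <= V /\ v - e <= V := mg _.
have Ap : A <= p by apply: mx; lra.
have Bq : B <= q by apply: mx; lra.
have Uw : U <= w by apply: mx; lra.
have Vz : V <= z by apply: mx; lra.
have Ak : A <= 1 - e by apply: mx; lra.
have Bk : B <= 1 - e by apply: mx; lra.
have Uk : U <= 1 - e by apply: mx; lra.
have Vk : V <= 1 - e by apply: mx; lra.
have r1 : A * (1 - e - U) <= p * (1 - u) by apply: ler_pM; lra.
have r2 : B * (1 - e - V) <= (1 - v) * q by rewrite [_ * q]mulrC; apply: ler_pM; lra.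
have r3 : U * V <= z * w by rewrite mulrC; apply: ler_pM; lra.
have X1 : (1 + e) * a * b - e * a - e * b <= A by apply: step3 => //; apply/andP.
have X2 : (1 + e) * b * a - e * b - e * a <= B by apply: step3 => //; apply/andP.
have eL : (1 - e) * (a * b) + e * (1 - e) * ((1 - a) * (1 - b)) - e * (1 - e)
   = (1 - e) * ((1 + e) * a * b - e * a - e * b) by ring.
have k0 : 0 <= 1 - e by lra.
have S : (1 - e) * ((1 + e) * a * b - e * a - e * b) <= A * (1 - e - U) + B * (1 - e - V) + U * V.
  case: (lerP A B) => hAB.
    have := step2 k0 (introT andP (conj A0 Ak)) (introT andP (conj B0 Bk)) (introT andP (conj U0 Uk)) (introT andP (conj V0 Vk)) hAB.
    have : (1 - e) * ((1 + e) * a * b - e * a - e * b) <= (1 - e) * A.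
      by apply: ler_wpM2l => //; lra.
    lra.
  have hBA : B <= A by lra.
  have := step2 k0 (introT andP (conj B0 Bk)) (introT andP (conj A0 Ak)) (introT andP (conj V0 Vk)) (introT andP (conj U0 Uk)) hBA.
  have : (1 - e) * ((1 + e) * a * b - e * a - e * b) <= (1 - e) * B.
    by apply: ler_wpM2l => //; lra.
  lra.
lra.
Qed.
Section Int.
Context (d : measure_display) (L : measurableType d) (R : realType) (q : probability L R).

Lemma mEF (f : L -> R) : measurable_fun setT f -> measurable_fun setT (EFin \o f).
Proof. by move=> mf; apply/measurable_EFinP. Qed.

Lemma intD (f g : L -> R) : (forall l, 0 <= f l) -> (forall l, 0 <= g l) ->
  measurable_fun setT f -> measurable_fun setT g ->
  (\int[q]_l ((f l + g l)%:E) = \int[q]_l (f l)%:E + \int[q]_l (g l)%:E)%E.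
Proof.
move=> f0 g0 mf mg.
under eq_integral => l _ do rewrite EFinD.
apply: ge0_integralD => //; try exact: mEF.
- by move=> l _; rewrite lee_fin.
- by move=> l _; rewrite lee_fin.
Qed.

Lemma intZ (c : R) (f : L -> R) : 0 <= c -> (forall l, 0 <= f l) ->
  measurable_fun setT f ->
  (\int[q]_l ((c * f l)%:E) = c%:E * \int[q]_l (f l)%:E)%E.
Proof.
move=> c0 f0 mf.
under eq_integral => l _ do rewrite EFinM.
apply: ge0_integralZl => //; first exact: mEF.
by move=> l _; rewrite lee_fin.
Qed.

Lemma intC (c : R) : (\int[q]_l (c%:E) = c%:E)%E.
Proof.
rewrite integral_cst //.
by rewrite -[RHS]mule1; congr (_ * _)%E; apply: probability_setT.
Qed.

Lemma intle (f g : L -> R) : (forall l, 0 <= f l) -> (forall l, f l <= g l) ->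
  measurable_fun setT f -> measurable_fun setT g ->
  (\int[q]_l (f l)%:E <= \int[q]_l (g l)%:E)%E.
Proof.
move=> f0 fg mf mg.
apply: ge0_le_integral => //; try exact: mEF.
- by move=> l _; rewrite lee_fin.
- by move=> l _; rewrite lee_fin.
Qed.
End Int.

Arguments pointwise {R e a p v z b q u w}.

Lemma sig_help (R : realType) (e x y : R) :
  2^-1 * (`|x - y| + `|(1 - x) - (1 - y)|) <= e -> `|x - y| <= e.
Proof.
have -> : (1 - x) - (1 - y) = - (x - y) by ring.
rewrite normrN; lra.
Qed.

Lemma bound (R : realType) (eps : R) (p : bool -> bool -> bool -> bool -> R) :
  0 <= eps -> eps <= 1 -> P2 eps eps p ->
  (1 - eps) * p false false false false + eps * (1 - eps) * p true true false false
    - p false true false true - p true false true false - p false false true true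
    <= eps * (1 - eps).
Proof.
move=> e0 e1 [dd [L [q [pA [pB [mA [mB [A0 [A1 [B0 [B1 [sA [sB hp]]]]]]]]]]]]].
have At : forall x y l, pA true x y l = 1 - pA false x y l.
  by move=> x y l; have := A1 x y l; lra.
have Bt : forall x y l, pB true x y l = 1 - pB false x y l.
  by move=> x y l; have := B1 x y l; lra.
have Ab : forall a x y l, 0 <= pA a x y l <= 1.
  move=> a x y l; have := A0 false x y l; have := A0 true x y l; have := A1 x y l.
  by case: a => ? ? ?; apply/andP; split; lra.
have Bb : forall b x y l, 0 <= pB b x y l <= 1.
  move=> b x y l; have := B0 false x y l; have := B0 true x y l; have := B1 x y l.
  by case: b => ? ? ?; apply/andP; split; lra.
have sA' : forall x y y' l, `|pA false x y l - pA false x y' l| <= eps.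
  by move=> x y y' l; apply: sig_help; rewrite -!At; apply: sA.
have sB' : forall y x x' l, `|pB false x y l - pB false x' y l| <= eps.
  by move=> y x x' l; apply: sig_help; rewrite -!Bt; apply: sB.
have Pf : forall a b x y l, 0 <= pA a x y l * pB b x y l.
  by move=> a b x y l; apply: mulr_ge0; [case/andP: (Ab a x y l) | case/andP: (Bb b x y l)].
have Mf : forall a b x y, measurable_fun setT (fun l => pA a x y l * pB b x y l).
  by move=> a b x y; apply: measurable_funM.
have Mc : forall c : R, measurable_fun setT (fun _ : L => c).
  by move=> c; apply: measurable_cst.
pose f a b x y l := pA a x y l * pB b x y l.
pose F1 l := (1 - eps) * f false false false false l + eps * (1 - eps) * f true true false false l.
pose F2 l := eps * (1 - eps) + (f false true false true l + (f true false true false l + f false false true true l)).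
have k0 : 0 <= 1 - eps by lra.
have ek : 0 <= eps * (1 - eps) by apply: mulr_ge0.
have I1 : (\int[q]_l (F1 l)%:E = ((1 - eps) * p false false false false + eps * (1 - eps) * p true true false false)%:E)%E.
  rewrite /F1 intD; first last.
  - by apply: measurable_funM => //; apply: Mf.
  - by apply: measurable_funM => //; apply: Mf.
  - by move=> l; apply: mulr_ge0 => //; apply: Pf.
  - by move=> l; apply: mulr_ge0 => //; apply: Pf.
  rewrite !intZ //; try apply: Mf; try apply: Pf.
  by rewrite /f -!hp EFinD !EFinM.
have I2 : (\int[q]_l (F2 l)%:E = (eps * (1 - eps) + (p false true false true + (p true false true false + p false false true true)))%:E)%E.
  rewrite /F2 intD //; first last.
  - apply: measurable_funD => //; first exact: Mf.
    by apply: measurable_funD; apply: Mf.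
  - by move=> l; do 2?apply: addr_ge0; apply: Pf.
  rewrite intC intD //; try apply: Mf; try apply: Pf; first last.
  - by apply: measurable_funD; apply: Mf.
  - by move=> l; apply: addr_ge0; apply: Pf.
  rewrite intD //; try apply: Mf; try apply: Pf.
  by rewrite /f -!hp !EFinD.
have I3 : (\int[q]_l (F1 l)%:E <= \int[q]_l (F2 l)%:E)%E.
  apply: intle.
  - by move=> l; apply: addr_ge0; apply: mulr_ge0 => //; apply: Pf.
  - move=> l; rewrite /F1 /F2 /f !At !Bt.
    have := pointwise e0 e1 (Ab false false false l) (Ab false false true l) (Ab false true false l)
      (Ab false true true l) (Bb false false false l) (Bb false true false l) (Bb false false true l)
      (Bb false true true l).
    move=> /(_ (sA' false false true l) (sA' true false true l) (sB' false false true l) (sB' true false true l)).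
    lra.
  - by apply: measurable_funD; apply: measurable_funM => //; apply: Mf.
  - apply: measurable_funD => //; apply: measurable_funD; first exact: Mf.
    by apply: measurable_funD; apply: Mf.
move: I3; rewrite I1 I2 lee_fin; lra.
Qed.
Theorem mainTheorem7 (R : realType) (eps : R) (heps0 : 0 <= eps) (heps1 : eps < 1) :
  let theta := asin (3 - Num.sqrt (4 * eps + 5)) in
  let s := sin theta in
  let psi : 'cV[R]_(2 * 2) :=
    cos (theta / 2) *: ket2 0 0 - sin (theta / 2) *: ket2 1 1 in
  let A0 : 'M[R]_2 :=
    (- ((2 + s) * Num.sqrt (1 - s)) / ((2 - s) * Num.sqrt (1 + s))) *: sigma_z
    - (Num.sqrt 2 * Num.sqrt s ^+ 3 / ((2 - s) * Num.sqrt (1 + s))) *: sigma_x in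
  let A1 : 'M[R]_2 :=
    - Num.sqrt ((1 - s) / (1 + s)) *: sigma_z + Num.sqrt (2 * s / (1 + s)) *: sigma_x in
  let A := fun x : bool => if x then A1 else A0 in
  let B := A in
  let p := born psi A B in
  [/\ p false true false true = 0, p true false true false = 0 & p false false true true = 0] /\
  [/\ p false false false false + eps * p true true false false
        = ((4 * eps + 5) * Num.sqrt (4 * eps + 5) - (12 * eps + 11)) / (2 * (1 + eps)),
      ((4 * eps + 5) * Num.sqrt (4 * eps + 5) - (12 * eps + 11)) / (2 * (1 + eps)) > eps,
      (1 - eps) * p false false false false + eps * (1 - eps) * p true true false false
        - p false true false true - p true false true false - p false false true true
        > eps * (1 - eps)
    & ~ P2 eps eps p].
Proof.
move=> theta s psi A0 A1 A B p.
set r := Num.sqrt (4 * eps + 5).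
have hr2 : r ^+ 2 = 4 * eps + 5 by rewrite sqr_sqrtr //; lra.
have r0 : 0 <= r by apply: sqrtr_ge0.
have r2 : 2 < r by nra.
have r3 : r < 3 by nra.
have hx : -1 <= 3 - r <= 1 by apply/andP; split; lra.
have [_ hs] := asin_def hx.
have hs' : s = 3 - r by [].
have hC : cos theta = Num.sqrt (1 - s ^+ 2) by rewrite hs' cos_asin.
have s01 : 0 < s < 1 by rewrite hs'; apply/andP; split; lra.
set c := cos (theta / 2); set d := sin (theta / 2).
have hcd1 : c ^+ 2 + d ^+ 2 = 1 by rewrite cos2Dsin2.
have hth : theta = theta / 2 + theta / 2 by rewrite -splitr.
have hcd2 : c ^+ 2 - d ^+ 2 = cos theta by rewrite [in RHS]hth cosD -!expr2.
have hcd3 : 2 * c * d = s by rewrite /s [in RHS]hth sinD /c /d; ring.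
set az0 := - ((2 + s) * Num.sqrt (1 - s)) / ((2 - s) * Num.sqrt (1 + s)).
set ax0 := - (Num.sqrt 2 * Num.sqrt s ^+ 3 / ((2 - s) * Num.sqrt (1 + s))).
set az1 := - Num.sqrt ((1 - s) / (1 + s)).
set ax1 := Num.sqrt (2 * s / (1 + s)).
pose azf x := if x then az1 else az0.
pose axf x := if x then ax1 else ax0.
have pG : forall a b x y, p a b x y = G (cos theta) s (azf x) (axf x) (azf y) (axf y) ((-1) ^+ a) ((-1) ^+ b).
  move=> a b x y.
  have eA : forall z, A z = azf z *: sigma_z + axf z *: sigma_x.
    by case => //; rewrite /A /A0 /azf /axf /ax0 scaleNr.
  rewrite /p /born /B (eA x) (eA y) born_gen hcd1 hcd2 hcd3 /G; ring.
Show.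
have hC' : cos theta = Num.sqrt (1 - s ^+ 2) by [].
have [V1 V2 V3 V4 V5] := @alg_vals R s s01.
have p1 : p false true false true = 0 by rewrite pG hC' expr0 expr1.
have p2 : p true false true false = 0 by rewrite pG hC' expr0 expr1.
have p3 : p false false true true = 0 by rewrite pG hC' expr0.
have p4 := pG false false false false; rewrite hC' expr0 V4 in p4.
have p5 := pG true true false false; rewrite hC' expr1 V5 in p5.
have he : eps = (r ^+ 2 - 5) / 4 by rewrite hr2; field.
have hE : p false false false false + eps * p true true false false
    = ((4 * eps + 5) * r - (12 * eps + 11)) / (2 * (1 + eps)).
  rewrite p4 p5 hs' he; field; repeat (apply/andP; split); apply/eqP; nra.
have hd : ((4 * eps + 5) * r - (12 * eps + 11)) / (2 * (1 + eps)) - eps = (3 - r) ^+ 3 / (4 * (r - 1)).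
  rewrite he; field; repeat (apply/andP; split); apply/eqP; nra.
have hpos : 0 < (3 - r) ^+ 3 / (4 * (r - 1)).
  by apply: divr_gt0; [apply: exprn_gt0; lra | lra].
have hgt : eps < ((4 * eps + 5) * r - (12 * eps + 11)) / (2 * (1 + eps)) by lra.
have h3 : eps * (1 - eps) < (1 - eps) * p false false false false + eps * (1 - eps) * p true true false false
   - p false true false true - p true false true false - p false false true true.
  rewrite p1 p2 p3 !subr0.
  have -> : (1 - eps) * p false false false false + eps * (1 - eps) * p true true false false
    = (1 - eps) * (p false false false false + eps * p true true false false) by ring.
  rewrite hE [eps * _]mulrC ltr_pM2l //; lra.
split; first by split.
split => //.
move=> H; have := @bound R eps p heps0 (ltW heps1) H; lra.
Qed.
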